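(* Let $k\ge2$ and let $p_1,\dots,p_k$ be distinct primes, $n=p_1\cdots p_k$. Then $$\Phi_{n}(x)=f(x)\cdot\prod_{j=1}^{k-2}P_j(x),$$ where $$f(x)=(1-x^{n})\cdot\frac{\prod_{i=2}^k\big(1-x^{p_2\cdots p_k/p_i}\big)}{\prod_{i=1}^k\big(1-x^{n/p_i}\big)}\qquad\text{and}\qquad P_j(x)=\prod_{i=j+2}^k\Phi_{p_1\cdots p_j}\big(x^{p_{j+2}\cdots p_k/p_i}\big).$$
   Context: $\Phi_m$ denotes the $m$-th cyclotomic polynomial. In the exponents, $p_2\cdots p_k/p_i$ means the product $p_2p_3\cdots p_k$ divided by $p_i$, and $p_{j+2}\cdots p_k/p_i$ means the product $p_{j+2}\cdots p_k$ divided by $p_i$. Empty products equal $1$. *)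

(* Defs.v *)
From HB Require Import structures.
From mathcomp Require Import all_boot all_order all_algebra all_field.
From mathcomp Require Import fraction.
Set Implicit Arguments. Unset Strict Implicit. Unset Printing Implicit Defensive.
Import GRing.Theory.
Local Open Scope ring_scope.

Notation "x %:F" := (@FracField.tofrac _ x) : ring_scope.

(* Primes are indexed p 1, ..., p k (values of p outside 1..k are irrelevant). *)
Definition prodp (p : nat -> nat) (a b : nat) : nat := (\prod_(a <= i < b.+1) p i)%N.

Definition f_cyc (p : nat -> nat) (k : nat) : {fraction {poly int}} :=
  (((1 - 'X^(prodp p 1 k)) *
     \prod_(2 <= i < k.+1) (1 - 'X^(prodp p 2 k %/ p i)%N)) : {poly int})%:F /
  ((\prod_(1 <= i < k.+1) (1 - 'X^(prodp p 1 k %/ p i)%N)) : {poly int})%:F.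

Definition P_cyc (p : nat -> nat) (k j : nat) : {poly int} :=
  \prod_(j.+2 <= i < k.+1) ('Phi_(prodp p 1 j) \Po 'X^(prodp p j.+2 k %/ p i)%N).

(* Main.v *)
Require Import Defs.
From HB Require Import structures.
From mathcomp Require Import all_boot all_order all_algebra all_field.
From mathcomp Require Import fraction.
Set Implicit Arguments. Unset Strict Implicit. Unset Printing Implicit Defensive.
Import GRing.Theory.
Local Open Scope ring_scope.

Lemma comp_XnXn (R : nzRingType) a b : ('X^a : {poly R}) \Po 'X^b = 'X^(b * a).
Proof. by rewrite comp_Xn_poly exprM. Qed.
Lemma divisors_mulp m p : prime p -> (0 < m)%N -> ~~ (p %| m)%N ->
  perm_eq (divisors (m * p)) (divisors m ++ [seq (d * p)%N | d <- divisors m]).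
Proof.
move=> pp m0 npm; have p0 := prime_gt0 pp.
apply: uniq_perm.
- exact: divisors_uniq.
- rewrite cat_uniq divisors_uniq /= map_inj_uniq ?divisors_uniq; last first.
    by move=> a b /eqP; rewrite eqn_pmul2r // => /eqP.
  rewrite andbT; apply/hasPn => _ /mapP [d dm ->].
  rewrite -dvdn_divisors //; apply/negP => /(dvdn_trans (dvdn_mull d (dvdnn p))).
  by rewrite (negbTE npm).
move=> x; rewrite mem_cat -!dvdn_divisors ?muln_gt0 ?m0 ?p0 //.
apply/idP/idP.
- case: (boolP (p %| x)%N) => [/dvdnP [e ->] | npx].
  + rewrite dvdn_pmul2r // => em. 
    by rewrite (map_f (fun d => d * p)%N) ?orbT; last rewrite -dvdn_divisors.
  + rewrite Gauss_dvdl; first by move=> ->.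
    by rewrite coprime_sym prime_coprime.
- case/orP => [xm | /mapP [d dm ->]]; first exact: dvdn_mulr.
  by rewrite dvdn_pmul2r // dvdn_divisors.
Qed.

Lemma Phi_neq0 n : 'Phi_n != 0.
Proof. by rewrite monic_neq0 // Cyclotomic_monic. Qed.

Lemma Phi_comp m p : prime p -> (0 < m)%N -> ~~ (p %| m)%N ->
  'Phi_m \Po 'X^p = 'Phi_(m * p) * 'Phi_m.
Proof.
move=> pp; have p0 := prime_gt0 pp.
elim/ltn_ind: m => m IH m0 npm.
have E : \prod_(d <- divisors m) ('Phi_d \Po 'X^p) =
         \prod_(d <- divisors m) ('Phi_(d * p) * 'Phi_d).
  rewrite -(big_morph (fun q => q \Po 'X^p) (fun x y => comp_polyM x y _) (comp_polyC 1 _)).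
  rewrite (prod_Cyclotomic m0).
  rewrite comp_polyB comp_polyC comp_XnXn mulnC.
  have mp0 : (0 < m * p)%N by rewrite muln_gt0 m0 p0.
  rewrite -(prod_Cyclotomic mp0).
  rewrite (perm_big _ (divisors_mulp pp m0 npm)).
  by rewrite big_cat big_map big_split /= mulrC.
have mD : m \in divisors m by exact: divisors_id.
have uD := divisors_uniq m.
move: E; rewrite (bigD1_seq m mD uD) [X in _ = X -> _](bigD1_seq m mD uD) /=.
have H : \prod_(i <- divisors m | i != m) ('Phi_(i * p) * 'Phi_i) =
    \prod_(i <- divisors m | i != m) ('Phi_i \Po 'X^p).
  rewrite big_seq_cond [RHS]big_seq_cond; apply: eq_bigr => d /andP[dm dm1].
  rewrite -dvdn_divisors in dm; last exact: m0.
  have d0 : (0 < d)%N by exact: dvdn_gt0 m0 dm.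
  rewrite IH //.
  - by rewrite ltn_neqAle dm1 (dvdn_leq m0 dm).
  - by apply: contra npm => pd; exact: dvdn_trans pd dm.
rewrite H.
apply: mulIf; rewrite prodf_seq_neq0; apply/allP => d _; apply/implyP => _.
rewrite comp_poly_eq0 ?Phi_neq0 // size_polyXn ltnS.
exact: p0.
Qed.

Lemma prodp_recr p j : prodp p 1 j.+1 = (prodp p 1 j * p j.+1)%N.
Proof. by rewrite /prodp big_nat_recr. Qed.

Lemma prodp_recl p j k : (j <= k)%N -> prodp p j k = (p j * prodp p j.+1 k)%N.
Proof. by move=> jk; rewrite /prodp big_ltn // ltnS. Qed.

Lemma prodp_nil p j k : (k < j)%N -> prodp p j k = 1%N.
Proof. by move=> kj; rewrite /prodp big_geq. Qed.

Lemma prodp_dvd p a b i : (a <= i <= b)%N -> (p i %| prodp p a b)%N.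
Proof.
case/andP=> ai ib; have ib' : (i < b.+1)%N by rewrite ltnS.
rewrite /prodp (@big_cat_nat _ _ _ i a b.+1 _ _ ai (ltnW ib')) (big_ltn ib').
by apply: dvdn_mull; apply: dvdn_mulr; apply: dvdnn.
Qed.

Lemma prodp_gt0 p a b : (forall i, (a <= i <= b)%N -> prime (p i)) -> (0 < prodp p a b)%N.
Proof.
move=> hp; rewrite /prodp big_seq_cond; apply: (big_ind (fun x => 0 < x)%N) => //.
  by move=> x y; rewrite muln_gt0 => -> ->.
move=> i /andP []; rewrite mem_index_iota ltnS => hi _; exact: prime_gt0 (hp i hi).
Qed.

Lemma prodp_ndvd k p j : 
  (forall i, (1 <= i <= k)%N -> prime (p i)) ->
  (forall i j, (1 <= i <= k)%N -> (1 <= j <= k)%N -> p i = p j -> i = j) ->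
  (j < k)%N -> ~~ (p j.+1 %| prodp p 1 j)%N.
Proof.
move=> hp hd jk; have pj : prime (p j.+1) by apply: hp; rewrite ltn0Sn.
rewrite /prodp Euclid_dvd_prod //; apply/negP.
rewrite big_has_cond => /hasP [i]; rewrite mem_index_iota ltnS => /andP [i1 ij] /=.
have pi : prime (p i) by apply: hp; rewrite i1 (leq_trans ij) // ltnW.
rewrite dvdn_prime2 // => /eqP E.
have := hd _ _ _ _ E; rewrite ltn0Sn jk (leq_trans ij (ltnW jk)) i1 => /(_ isT isT) ej.
by move: ij; rewrite -ej ltnn.
Qed.

Definition Cc p k j : {poly int} := 'Phi_(prodp p 1 j) \Po 'X^(prodp p j.+1 k).
Definition Dc p k j : {poly int} := 'Phi_(prodp p 1 j) \Po 'X^(prodp p j.+2 k).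
Definition Gc p k j : {poly int} :=
  \prod_(j.+1 <= i < k.+1) ('Phi_(prodp p 1 j) \Po 'X^(prodp p j.+1 k %/ p i)).

Lemma keyc k p j b :
  (forall i, (1 <= i <= k)%N -> prime (p i)) ->
  (forall i j, (1 <= i <= k)%N -> (1 <= j <= k)%N -> p i = p j -> i = j) ->
  (j < k)%N ->
  'Phi_(prodp p 1 j) \Po 'X^(p j.+1 * b) =
  ('Phi_(prodp p 1 j.+1) \Po 'X^b) * ('Phi_(prodp p 1 j) \Po 'X^b).
Proof.
move=> hp hd jk.
have pj : prime (p j.+1) by apply: hp; rewrite ltn0Sn.
have n0 : (0 < prodp p 1 j)%N.
  apply: prodp_gt0 => i /andP [i1 ij]; apply: hp; rewrite i1 /=.
  exact: leq_trans ij (ltnW jk).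
rewrite mulnC -comp_XnXn comp_polyA (Phi_comp pj n0 (prodp_ndvd hp hd jk)).
by rewrite comp_polyM prodp_recr.
Qed.

Lemma stepC k p j :
  (forall i, (1 <= i <= k)%N -> prime (p i)) ->
  (forall i j, (1 <= i <= k)%N -> (1 <= j <= k)%N -> p i = p j -> i = j) ->
  (j < k)%N -> Cc p k j = Cc p k j.+1 * Dc p k j.
Proof.
move=> hp hd jk; rewrite /Cc /Dc (prodp_recl p jk).
exact: keyc hp hd jk.
Qed.

Lemma stepG k p j :
  (forall i, (1 <= i <= k)%N -> prime (p i)) ->
  (forall i j, (1 <= i <= k)%N -> (1 <= j <= k)%N -> p i = p j -> i = j) ->
  (j < k)%N -> Gc p k j = Dc p k j * (Gc p k j.+1 * P_cyc p k j).
Proof.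
move=> hp hd jk.
have pj : prime (p j.+1) by apply: hp; rewrite ltn0Sn.
have jk' : (j.+1 < k.+1)%N by [].
rewrite /Gc (big_ltn jk') (prodp_recl p jk) mulKn ?prime_gt0 //.
congr (_ * _); rewrite /P_cyc -big_split /=.
rewrite big_seq_cond [RHS]big_seq_cond; apply: eq_bigr => i /andP [].
rewrite mem_index_iota ltnS => /andP [ji ik] _.
rewrite -muln_divA; last by apply: prodp_dvd; rewrite ji ik.
exact: keyc hp hd jk.
Qed.

Lemma teleC k p j :
  (forall i, (1 <= i <= k)%N -> prime (p i)) ->
  (forall i j, (1 <= i <= k)%N -> (1 <= j <= k)%N -> p i = p j -> i = j) ->
  (j <= k)%N -> Cc p k 0 = Cc p k j * \prod_(0 <= i < j) Dc p k i.
Proof.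
move=> hp hd; elim: j => [|j IH] jk; first by rewrite big_geq // mulr1.
rewrite IH ?(ltnW jk) // (stepC hp hd jk) big_nat_recr //= -!mulrA; congr (_ * _); exact: mulrC.
Qed.

Lemma teleG k p j :
  (forall i, (1 <= i <= k)%N -> prime (p i)) ->
  (forall i j, (1 <= i <= k)%N -> (1 <= j <= k)%N -> p i = p j -> i = j) ->
  (j <= k)%N -> Gc p k 0 = Gc p k j * \prod_(0 <= i < j) (Dc p k i * P_cyc p k i).
Proof.
move=> hp hd; elim: j => [|j IH] jk; first by rewrite big_geq // mulr1.
rewrite IH ?(ltnW jk) // (stepG hp hd jk) big_nat_recr //=.
set A := Dc p k j; set B := Gc p k j.+1; set C := P_cyc p k j.
by rewrite [A * (B * C)]mulrCA -mulrA; congr (B * _); exact: mulrC.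
Qed.

Lemma Phi1 : 'Phi_1 = 'X - 1.
Proof.
have := prod_Cyclotomic (ltn0Sn 0).
have -> : divisors 1 = [:: 1%N] by [].
by rewrite big_seq1 expr1.
Qed.

Lemma sgnprod a b (F : nat -> {poly int}) :
  \prod_(a <= i < b) (1 - F i) = (-1) ^+ (b - a) * \prod_(a <= i < b) (F i - 1).
Proof.
rewrite -prodr_const_nat -big_split /=; apply: eq_bigr => i _.
by rewrite mulN1r opprB.
Qed.

Lemma core k p :
  (forall i, (1 <= i <= k)%N -> prime (p i)) ->
  (forall i j, (1 <= i <= k)%N -> (1 <= j <= k)%N -> p i = p j -> i = j) ->
  'Phi_(prodp p 1 k) * \prod_(1 <= i < k.+1) ('X^(prodp p 1 k %/ p i) - 1) =
  ('X^(prodp p 1 k) - 1) * \prod_(0 <= j < k) P_cyc p k j.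
Proof.
move=> hp hd.
have C0 := teleC hp hd (leqnn k).
have G0 := teleG hp hd (leqnn k).
have e1 : prodp p 1 0 = 1%N by rewrite prodp_nil.
have Ck : Cc p k k = 'Phi_(prodp p 1 k).
  by rewrite /Cc prodp_nil // expr1 comp_polyXr.
have Gk : Gc p k k = 1 by rewrite /Gc big_geq.
rewrite Ck /Cc e1 Phi1 comp_polyB comp_polyX comp_polyC in C0.
rewrite Gk mul1r big_split /= /Gc e1 Phi1 in G0.
have -> : \prod_(1 <= i < k.+1) ('X^(prodp p 1 k %/ p i) - 1) = Gc p k 0.
  by rewrite /Gc e1 Phi1; apply: eq_bigr => i _; rewrite comp_polyB comp_polyX comp_polyC.
by rewrite /Gc e1 Phi1 G0 mulrA -C0 polyC1.
Qed.

Lemma XnB1_neq0 e : (0 < e)%N -> ('X^e - 1 : {poly int}) != 0.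
Proof. by move=> e0; rewrite -size_poly_eq0 size_Xn_sub_1. Qed.

Theorem lemma1 (k : nat) (p : nat -> nat)
  (hk : (2 <= k)%N)
  (hprime : forall i, (1 <= i <= k)%N -> prime (p i))
  (hdist : forall i j, (1 <= i <= k)%N -> (1 <= j <= k)%N -> p i = p j -> i = j) :
  ('Phi_(prodp p 1 k))%:F =
    f_cyc p k * \prod_(1 <= j < k.-1) (P_cyc p k j)%:F.
Proof.
have Hc := core hprime hdist.
have N0 : (0 < prodp p 1 k)%N by apply: prodp_gt0.
have e0 : forall i, (1 <= i <= k)%N -> (0 < prodp p 1 k %/ p i)%N.
  move=> i hi; rewrite divn_gt0 ?prime_gt0 ?hprime //.
  exact: dvdn_leq N0 (prodp_dvd p hi).
set Dn := \prod_(1 <= i < k.+1) (1 - 'X^(prodp p 1 k %/ p i)) : {poly int}.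
have Dn0 : Dn != 0.
  rewrite /Dn sgnprod mulf_eq0 negb_or signr_eq0 /=.
  rewrite prodf_seq_neq0; apply/allP => i; rewrite mem_index_iota ltnS => hi.
  apply/implyP => _; exact: XnB1_neq0 (e0 i hi).
have Hpoly : 'Phi_(prodp p 1 k) * Dn =
   ((1 - 'X^(prodp p 1 k)) * \prod_(2 <= i < k.+1) (1 - 'X^(prodp p 2 k %/ p i)))
   * \prod_(1 <= j < k.-1) P_cyc p k j.
  have [m km] : exists m, k = m.+2 by exists k.-2; move: hk; clear; case: k => [|[|k]].
  have P0 : P_cyc p k 0 = \prod_(2 <= i < k.+1) ('X^(prodp p 2 k %/ p i) - 1).
    rewrite /P_cyc (@prodp_nil p 1 0 isT) Phi1; apply: eq_bigr => i _.
    by rewrite comp_polyB comp_polyX comp_polyC polyC1.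
  have Pl : P_cyc p m.+2 m.+1 = 1 by rewrite /P_cyc big_geq.
  have Hs : \prod_(0 <= j < k) P_cyc p k j =
      P_cyc p k 0 * \prod_(1 <= j < k.-1) P_cyc p k j.
    by rewrite km big_ltn // big_nat_recr //= Pl mulr1.
  rewrite /Dn !sgnprod mulrCA Hc Hs -P0.
  have -> : (k.+1 - 1 = (k.-1).+1)%N by rewrite km.
  have -> : (k.+1 - 2 = k.-1)%N by rewrite km.
  set A := 'X^_ - 1; set Q := P_cyc p k 0; set M := \prod_(_ <= _ < _) _.
  have -> : 1 - 'X^(prodp p 1 k) = -1 * A by rewrite mulN1r opprB.
  by rewrite exprS -!mulrA; congr (_ * _); exact: mulrCA.
rewrite /f_cyc -rmorph_prod -/Dn.
have Dn0' : Dn%:F != 0 by rewrite tofrac_eq0.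
by rewrite -[LHS](mulfK Dn0') -rmorphM Hpoly rmorphM mulrAC.
Qed.
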